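(* There exists a regular $K_4$-saturated graph on $n$ vertices for every positive integer $n$ satisfying $n\equiv 6 \pmod 8$, for every positive integer $n$ satisfying $n\equiv 0\pmod 8$, and for every positive integer $n$ satisfying $n\equiv 0\pmod{17}$.
   Context: All graphs are finite and simple. A graph $G$ is $K_4$-saturated if it contains no copy of the complete graph $K_4$ but adding any edge between two non-adjacent vertices creates a copy of $K_4$. A graph is regular if all vertices have the same degree. *)

(* Defs.v *)
From mathcomp Require Import all_boot.
Set Implicit Arguments. Unset Strict Implicit. Unset Printing Implicit Defensive.

Definition simple_graph (T : finType) (e : rel T) : Prop :=
  symmetric e /\ irreflexive e.

Definition has_K4 (T : finType) (e : rel T) : Prop :=
  exists a b c d : T,
    [/\ uniq [:: a; b; c; d],
        [&& e a b, e a c & e a d],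
        [&& e b c & e b d] & e c d].

Definition add_edge (T : finType) (e : rel T) (u v : T) : rel T :=
  fun x y => e x y || ((x == u) && (y == v)) || ((x == v) && (y == u)).

Definition K4_saturated (T : finType) (e : rel T) : Prop :=
  ~ has_K4 e /\
  forall u v : T, u != v -> ~~ e u v -> has_K4 (add_edge e u v).

Definition regular_graph (T : finType) (e : rel T) : Prop :=
  exists k : nat, forall x : T, #|[set y | e x y]| = k.

(* Main.v *)
Require Import Defs.
From mathcomp Require Import all_boot zify.
Set Implicit Arguments. Unset Strict Implicit. Unset Printing Implicit Defensive.

Lemma K4_of_clique (T : finType) (e : rel T) a b c d : irreflexive e ->
  e a b -> e a c -> e a d -> e b c -> e b d -> e c d -> has_K4 e.
Proof.
move=> irr ab ac ad bc bd cd; exists a, b, c, d; split; rewrite ?ab ?ac ?ad ?bc ?bd ?cd //.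
have ne x y : e x y -> x != y by move=> h; apply/eqP=> E; move: h; rewrite E irr.
by rewrite /= !inE !negb_or (ne _ _ ab) (ne _ _ ac) (ne _ _ ad) (ne _ _ bc) (ne _ _ bd) (ne _ _ cd).
Qed.

Lemma K4_witness (T : finType) (e : rel T) u v w z : irreflexive e -> u != v ->
  e u w -> e v w -> e u z -> e v z -> e w z -> has_K4 (add_edge e u v).
Proof.
move=> irr uv uw vw uz vz wz.
apply: (@K4_of_clique _ _ u v w z); rewrite /add_edge ?uw ?vw ?uz ?vz ?wz ?eqxx ?orbT //.
move=> x /=; rewrite irr /=; case: (x =P u) => [E|]; case: (x =P v) => [E'|] //=.
by rewrite -E -E' eqxx in uv.
Qed.

Lemma transport (T1 T2 : finType) (f : T1 -> T2) (g : T2 -> T1) (e2 : rel T2) :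
  cancel f g -> cancel g f ->
  [/\ simple_graph e2, regular_graph e2 & K4_saturated e2] ->
  [/\ simple_graph (fun x y => e2 (f x) (f y)), regular_graph (fun x y => e2 (f x) (f y))
    & K4_saturated (fun x y => e2 (f x) (f y))].
Proof.
move=> fK gK [[sym irr] [k hk] [nk sat]]; split.
- by split; [move=> x y; apply: sym | move=> x; apply: irr].
- exists k => x; rewrite -(hk (f x)).
  have -> : [set y | e2 (f x) (f y)] = g @: [set z | e2 (f x) z].
    by rewrite (can2_imset_pre _ gK fK); apply/setP => y; rewrite !inE.
  by rewrite card_imset //; apply: can_inj gK.
- split.
  + move=> [a [b [c [d [U h1 h2 h3]]]]]; apply: nk; exists (f a), (f b), (f c), (f d); split => //.
    change (uniq (map f [:: a; b; c; d])); rewrite map_inj_uniq //; exact: can_inj fK.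
  + move=> u v uv nuv.
    have fuv : f u != f v by rewrite (can_eq fK).
    have [a [b [c [d [U h1 h2 h3]]]]] := sat _ _ fuv nuv.
    have G z w : (g z == w) = (z == f w) by rewrite -(can_eq fK) gK.
    have E x y : add_edge (fun x y => e2 (f x) (f y)) u v (g x) (g y) = add_edge e2 (f u) (f v) x y.
      by rewrite /add_edge !gK !G.
    exists (g a), (g b), (g c), (g d); split; rewrite ?E //.
    change (uniq (map g [:: a; b; c; d])); rewrite map_inj_uniq //; exact: can_inj gK.
Qed.

Lemma to_ord (T : finType) n (e : rel T) : #|T| = n ->
  [/\ simple_graph e, regular_graph e & K4_saturated e] ->
  exists e : rel 'I_n, [/\ simple_graph e, regular_graph e & K4_saturated e].
Proof.
move=> <- H; eexists; exact: (transport (@enum_valK T) (@enum_rankK T) H).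
Qed.

Lemma blowup (S : finType) (H : rel S) t k : 0 < t ->
  symmetric H -> irreflexive H -> (forall x, #|[set y | H x y]| = k) ->
  (forall a b c d, ~~ [&& H a b, H a c, H a d, H b c, H b d & H c d]) ->
  (forall u v, u != v -> ~~ H u v -> exists w z, [&& H u w, H v w, H u z, H v z & H w z]) ->
  (forall c, exists w z, [&& H c w, H c z & H w z]) ->
  let e := fun x y : S * 'I_t => H x.1 y.1 in
  [/\ simple_graph e, regular_graph e & K4_saturated e].
Proof.
move=> t0 sym irr reg k4 wit nb e.
have irre : irreflexive e by move=> x; apply: irr.
split.
- by split => // x y; apply: sym.
- exists (k * t) => x.
  have -> : [set y | e x y] = setX [set y | H x.1 y] [set: 'I_t].
    by apply/setP => y; rewrite !inE andbT.
  by rewrite cardsX reg cardsT card_ord.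
- split.
  + move=> [a [b [c [d [U /and3P [ab ac ad] /andP [bc bd] cd]]]]].
    by move: (k4 a.1 b.1 c.1 d.1); rewrite /e /= in ab ac ad bc bd cd *; rewrite ab ac ad bc bd cd.
  + move=> u v uv nuv.
    case: (eqVneq u.1 v.1) => E.
    * have [w [z /and3P [h1 h2 h3]]] := nb u.1.
      apply: (@K4_witness _ _ _ _ (w, u.2) (z, u.2)) => //; rewrite /e /= -?E //.
    * have [w [z /and5P [h1 h2 h3 h4 h5]]] := wit _ _ E nuv.
      by apply: (@K4_witness _ _ _ _ (w, u.2) (z, u.2)).
Qed.

Definition chk m (hn : nat -> nat -> bool) k : bool :=
  let V := iota 0 m in
  [&& all (fun x => all (fun y => hn x y == hn y x) V) V,
      all (fun x => ~~ hn x x) V,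
      all (fun x => count (hn x) V == k) V,
      all (fun a => all (fun b => all (fun c => all (fun d =>
         ~~ [&& hn a b, hn a c, hn a d, hn b c, hn b d & hn c d]) V) V) V) V,
      all (fun u => all (fun v => (u != v) && ~~ hn u v ==>
         has (fun w => has (fun z => [&& hn u w, hn v w, hn u z, hn v z & hn w z]) V) V) V) V
    & all (fun c => has (fun w => has (fun z => [&& hn c w, hn c z & hn w z]) V) V) V].

Lemma card_nat m (p : nat -> bool) : #|[set y : 'I_m | p y]| = count p (iota 0 m).
Proof.
rewrite cardsE cardE /enum_mem size_filter -val_enum_ord count_map enumT.
by apply: eq_count => y.
Qed.

Lemma chk_blowup m hn k t : 0 < t -> chk m hn k ->
  let e := fun x y : 'I_m * 'I_t => hn x.1 y.1 in
  [/\ simple_graph e, regular_graph e & K4_saturated e].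
Proof.
move=> t0 /and5P [/allP hs /allP hi /allP hr /allP hk /andP [/allP hw /allP hn']].
have inV (x : 'I_m) : val x \in iota 0 m by rewrite mem_iota /=.
apply: (@blowup _ (fun x y : 'I_m => hn x y) t k) => //.
- by move=> x y /=; apply/eqP; move: (hs _ (inV x)) => /allP /(_ _ (inV y)).
- by move=> x; apply/negbTE; exact: hi (inV x).
- by move=> x; rewrite card_nat; apply/eqP; exact: hr (inV x).
- move=> a b c d.
  by move: (hk _ (inV a)) => /allP /(_ _ (inV b)) /allP /(_ _ (inV c)) /allP /(_ _ (inV d)).
- move=> u v uv nuv.
  move: (hw _ (inV u)) => /allP /(_ _ (inV v)); rewrite (inj_eq val_inj) uv nuv /=.
  move=> /hasP [w]; rewrite mem_iota /= => wm /hasP [z]; rewrite mem_iota /= => zm h.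
  by exists (Ordinal wm), (Ordinal zm).
- move=> c; move: (hn' _ (inV c)) => /hasP [w]; rewrite mem_iota /= => wm /hasP [z]; rewrite mem_iota /= => zm h.
  by exists (Ordinal wm), (Ordinal zm).
Qed.

Definition h8 (x y : nat) : bool := (x != y) && ~~ ((x < 3) && (y < 3)) &&
  (((x < 3) || (y < 3)) || (((x + 5 - y) %% 5 == 1) || ((x + 5 - y) %% 5 == 4))).
Definition pet (p q : nat) : bool :=
  if (p < 5) && (q < 5) then ((p + 5 - q) %% 5 == 1) || ((p + 5 - q) %% 5 == 4)
  else if (5 <= p) && (5 <= q) then ((p + 5 - q) %% 5 == 2) || ((p + 5 - q) %% 5 == 3)
  else (p + 5 == q) || (q + 5 == p).
Definition h17 (x y : nat) : bool := (x != y) && ~~ ((x < 7) && (y < 7)) &&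
  (((x < 7) || (y < 7)) || pet (x - 7) (y - 7)).

Lemma chk8 : chk 8 h8 5. Proof. by vm_compute. Qed.
Lemma chk17 : chk 17 h17 10. Proof. by vm_compute. Qed.

Lemma case_mult m hn k n : 0 < n -> n %% m = 0 -> chk m hn k ->
  exists e : rel 'I_n, [/\ simple_graph e, regular_graph e & K4_saturated e].
Proof.
move=> n0 nm c.
have dv : m %| n by rewrite /dvdn nm.
have nE : n = m * (n %/ m) by rewrite mulnC divnK.
have t0 : 0 < n %/ m by move: n0; rewrite {1}nE muln_gt0 => /andP [].
apply: (@to_ord ('I_m * 'I_(n %/ m))%type); last exact: chk_blowup t0 c.
by rewrite card_prod !card_ord -nE.
Qed.

Definition cadj (c x y : nat) : bool :=
  [&& c < (x - y) + (y - x), c < (8 * c + 6) - ((x - y) + (y - x))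
    & ((x - y) + (y - x) <= 3 * c + 2) || ((8 * c + 6) - ((x - y) + (y - x)) <= 3 * c + 2)].

Ltac solve_adj := rewrite /cadj; apply/and3P; split;
  [lia | lia | apply/orP; lia].

Lemma wit c x y : x < y -> y < 8 * c + 6 -> ~~ cadj c x y ->
  exists w z, [/\ w < 8 * c + 6, z < 8 * c + 6 &
    [&& cadj c x w, cadj c y w, cadj c x z, cadj c y z & cadj c w z]].
Proof.
move=> xy yN nadj.
have md v : v < 2 * (8 * c + 6) -> exists w, w < 8 * c + 6 /\ ((w = v /\ v < 8 * c + 6) \/ (w + (8 * c + 6) = v)).
  move=> hv; case: (ltnP v (8 * c + 6)) => h; first by exists v; split => //; left.
  by exists (v - (8 * c + 6)); split; [lia | right; lia].
have [hD|[hD|[hD1 hD2]]] : y - x <= c \/ (8 * c + 6) - (y - x) <= c \/ (3 * c + 2 < y - x /\ 3 * c + 2 < (8 * c + 6) - (y - x)).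
  have E : x - y = 0 by lia.
  rewrite /cadj E add0n in nadj.
  case: (leqP (y - x) c) => h0; first by left.
  case: (leqP (8 * c + 6 - (y - x)) c) => h1; first by right; left.
  by right; right; move: nadj; rewrite h0 h1 /= negb_or -!ltnNge => /andP [].
- have [w [wN hw]] := md (x + (3 * c + 2)) ltac:(lia).
  have [z [zN hz]] := md (y + (8 * c + 6) - (3 * c + 2)) ltac:(lia).
  exists w, z; split => //; apply/and5P; split; solve_adj.
- have [w [wN hw]] := md (y + (3 * c + 2)) ltac:(lia).
  have [z [zN hz]] := md (x + (8 * c + 6) - (3 * c + 2)) ltac:(lia).
  exists w, z; split => //; apply/and5P; split; solve_adj.
- case: (leqP (2 * (y - x)) (8 * c + 6)) => h.
  + exists (x + (c + 1)), (y - (c + 1)).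
    split; try lia; apply/and5P; split; solve_adj.
  + have [w [wN hw]] := md (y + (c + 1)) ltac:(lia).
    have [z [zN hz]] := md (x + (8 * c + 6) - (c + 1)) ltac:(lia).
    exists w, z; split => //; apply/and5P; split; solve_adj.
Qed.

Lemma cadj_lt c x y : x < y -> y < 8 * c + 6 -> cadj c x y ->
  exists D h, [/\ y = x + D, D + h = 8 * c + 6, c < D, c < h & (D <= 3 * c + 2 \/ h <= 3 * c + 2)].
Proof.
move=> xy yN /and3P [h1 h2 /orP h3]; exists (y - x), (8 * c + 6 - (y - x)).
split; lia.
Qed.

Lemma k4_sorted c x1 x2 x3 x4 : x1 < x2 -> x2 < x3 -> x3 < x4 -> x4 < 8 * c + 6 ->
  cadj c x1 x2 -> cadj c x1 x3 -> cadj c x1 x4 ->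
  cadj c x2 x3 -> cadj c x2 x4 -> cadj c x3 x4 -> False.
Proof.
move=> l12 l23 l34 l4 a12 a13 a14 a23 a24 a34.
have [D12 [h12 [e12 s12 p12 q12 r12]]] := @cadj_lt c x1 x2 ltac:(lia) ltac:(lia) a12.
have [D13 [h13 [e13 s13 p13 q13 r13]]] := @cadj_lt c x1 x3 ltac:(lia) ltac:(lia) a13.
have [D14 [h14 [e14 s14 p14 q14 r14]]] := @cadj_lt c x1 x4 ltac:(lia) ltac:(lia) a14.
have [D23 [h23 [e23 s23 p23 q23 r23]]] := @cadj_lt c x2 x3 ltac:(lia) ltac:(lia) a23.
have [D24 [h24 [e24 s24 p24 q24 r24]]] := @cadj_lt c x2 x4 ltac:(lia) ltac:(lia) a24.
have [D34 [h34 [e34 s34 p34 q34 r34]]] := @cadj_lt c x3 x4 ltac:(lia) ltac:(lia) a34.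
clear a12 a13 a14 a23 a24 a34 l12 l23 l34 l4.
lia.
Qed.

Lemma cadj_sym c x y : cadj c x y = cadj c y x.
Proof. by rewrite /cadj addnC. Qed.

Lemma k4_any c (s : seq nat) : uniq s -> size s = 4 -> all (fun x => x < 8 * c + 6) s ->
  {in s &, forall u v, u != v -> cadj c u v} -> False.
Proof.
move=> us ss alls hadj.
have pst : perm_eq (sort leq s) s := permEl (perm_sort leq s).
have ut : uniq (sort leq s) by rewrite (perm_uniq pst).
have st : sorted ltn (sort leq s) by rewrite ltn_sorted_uniq_leq ut sort_sorted //; exact: leq_total.
have szt : size (sort leq s) = 4 by rewrite (perm_size pst).
have memt u : (u \in sort leq s) = (u \in s) := perm_mem pst u.
move: ut st szt memt; case: (sort leq s) => [|x1 [|x2 [|x3 [|x4 [|]]]]] //= _.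
move=> /and4P [l12 l23 l34 _] _ mem.
have m1 : x1 \in s by rewrite -mem !inE eqxx.
have m2 : x2 \in s by rewrite -mem !inE eqxx !orbT.
have m3 : x3 \in s by rewrite -mem !inE eqxx !orbT.
have m4 : x4 \in s by rewrite -mem !inE eqxx !orbT.
have ad u v : u \in s -> v \in s -> u < v -> cadj c u v.
  by move=> hu hv uv; apply: hadj => //; rewrite neq_ltn uv.
apply: (@k4_sorted c x1 x2 x3 x4) => //.
- by move/allP: alls => /(_ _ m4).
- exact: ad.
- by apply: ad => //; apply: ltn_trans l23.
- by apply: ad => //; apply: ltn_trans l34; apply: ltn_trans l23.
- exact: ad.
- by apply: ad => //; apply: ltn_trans l34.
- exact: ad.
Qed.

Definition fD c D := [&& c < D, c < (8 * c + 6) - D & (D <= 3 * c + 2) || ((8 * c + 6) - D <= 3 * c + 2)].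

Lemma cadj_fD c x y : cadj c x y = fD c ((x - y) + (y - x)).
Proof. by []. Qed.

Lemma fD_sym c D : D <= 8 * c + 6 -> fD c (8 * c + 6 - D) = fD c D.
Proof. by move=> h; rewrite /fD subKn // andbCA orbC. Qed.

Lemma cadj_rot c x y : x < 8 * c + 6 -> y < 8 * c + 6 ->
  cadj c (if x.+1 < 8 * c + 6 then x.+1 else 0) (if y.+1 < 8 * c + 6 then y.+1 else 0) = cadj c x y.
Proof.
move=> xN yN; rewrite !cadj_fD.
case: (ltnP x.+1 (8 * c + 6)) => hx; case: (ltnP y.+1 (8 * c + 6)) => hy.
- by rewrite !subSS.
- rewrite -fD_sym; last lia. congr fD; lia.
- rewrite -fD_sym; last lia. congr fD; lia.
- congr fD; lia.
Qed.

Lemma circ c : exists e : rel 'I_(8 * c + 6),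
  [/\ simple_graph e, regular_graph e & K4_saturated e].
Proof.
pose N := 8 * c + 6.
pose e : rel 'I_N := fun x y => cadj c x y.
have irr : irreflexive e by move=> x; rewrite /e /cadj subnn.
have rot_lt (x : 'I_N) : (if x.+1 < N then x.+1 else 0) < N by case: ifP => // _; rewrite /N; lia.
pose rot (x : 'I_N) : 'I_N := Ordinal (rot_lt x).
have rot_inj : injective rot.
  move=> x y /(congr1 val) /= h; apply: val_inj => /=; move: h (ltn_ord x) (ltn_ord y).
  by case: (ltnP x.+1 N) => hx; case: (ltnP y.+1 N) => hy; lia.
have erot x y : e (rot x) (rot y) = e x y by rewrite /e /= cadj_rot.
have deg_rot x : #|[set y | e (rot x) y]| = #|[set y | e x y]|.
  have -> : [set y | e x y] = rot @^-1: [set y | e (rot x) y] by apply/setP => y; rewrite !inE erot.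
  by rewrite card_preimset.
have N0 : 0 < N by rewrite /N; lia.
have deg0 : forall i (hi : i < N), #|[set y | e (Ordinal hi) y]| = #|[set y | e (Ordinal N0) y]|.
  elim=> [|i IH] hi; first by have -> : Ordinal hi = Ordinal N0 by apply: val_inj.
  have hi' : i < N by apply: ltnW.
  have -> : Ordinal hi = rot (Ordinal hi') by apply: val_inj => /=; rewrite hi.
  by rewrite deg_rot IH.
exists e; split.
- by split => // x y; rewrite /e cadj_sym.
- exists #|[set y | e (Ordinal N0) y]| => x.
  by case: x => i hi; apply: deg0.
- split.
  + move=> [a [b [d [f [U /and3P [ab ad af] /andP [bd bf] df]]]]].
    apply: (@k4_any c [:: val a; val b; val d; val f]) => //.
    * by rewrite /= !ltn_ord.
    * move=> u v; rewrite !inE => /or4P [] /eqP -> /or4P [] /eqP -> ; rewrite ?eqxx //= => _;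
        first [assumption | rewrite cadj_sym; assumption].
  + move=> u v uv nuv.
    case: (ltngtP (val u) (val v)) => h.
    * have [w [z [wN zN /and5P [h1 h2 h3 h4 h5]]]] := @wit c u v h (ltn_ord v) nuv.
      by apply: (@K4_witness _ _ _ _ (Ordinal wN) (Ordinal zN)).
    * rewrite /e cadj_sym in nuv.
      have [w [z [wN zN /and5P [h1 h2 h3 h4 h5]]]] := @wit c v u h (ltn_ord u) nuv.
      by apply: (@K4_witness _ _ _ _ (Ordinal wN) (Ordinal zN)).
    * by move: uv; rewrite (val_inj h) eqxx.
Qed.

Theorem proposition4p1 (n : nat) :
  0 < n ->
  (n %% 8 = 6 \/ n %% 8 = 0 \/ n %% 17 = 0) ->
  exists e : rel 'I_n,
    [/\ simple_graph e, regular_graph e & K4_saturated e].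
Proof.
move=> n0 [h6|[h8|h17]].
- have hn : n = 8 * (n %/ 8) + 6 by rewrite {1}(divn_eq n 8) h6 mulnC.
  by move: (circ (n %/ 8)); rewrite -hn.
- exact: case_mult n0 h8 chk8.
- exact: case_mult n0 h17 chk17.
Qed.
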